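(* Let $f:\mathbb{R}^n\to\mathbb{R}$ be of class $C^{2+}$ with $L_f$-Lipschitz continuous gradient, let $g:\mathbb{R}^n\to\mathbb{R}\cup\{+\infty\}$ be proper, lower semicontinuous and $\rho$-weakly convex, let $\varphi=f+g$ with $\operatorname{argmin}\varphi\neq\emptyset$, and suppose $\{x:\varphi(x)\le\varphi(x^0)\}$ is bounded. Let $(x^k)$ be generated by the NTRA algorithm described in the context, and suppose that there is $M>0$ with $\|B_k\|\le M$ for all $k$ and there is $\beta\in(0,1)$ with $m_k(0)-m_k(d^k)\ge\beta\|\nabla\varphi_\gamma(x^k)\|\min\{\delta_k,\|\nabla\varphi_\gamma(x^k)\|/\|B_k\|\}$ for all $k$. Then $\liminf_{k\to\infty}\|\nabla\varphi_\gamma(x^k)\|=0$.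
   Context: $C^{2+}$: twice continuously differentiable with locally Lipschitz Hessian; $\rho$-weakly convex: $g+\frac\rho2\|\cdot\|^2$ convex. $\operatorname{prox}_{\gamma g}(x)=\operatorname{argmin}_z\{g(z)+\frac1{2\gamma}\|z-x\|^2\}$, $R_\gamma(x)=\gamma^{-1}(x-\operatorname{prox}_{\gamma g}(x-\gamma\nabla f(x)))$, forward-backward envelope $\varphi_\gamma(x)=\inf_u\{f(x)+\langle\nabla f(x),u-x\rangle+g(u)+\frac1{2\gamma}\|u-x\|^2\}$. $\partial_C$: Clarke generalized Jacobian. NTRA: given $x^0$, $\gamma\in(0,\min\{1/L_f,1/\rho\})$, $\delta_0>0$, $0<\mu_1<\mu_2<1$, $0<c_1<c_2<1<c_3$; for $k=0,1,\dots$: select $P_k\in\partial_C\operatorname{prox}_{\gamma g}(x^k-\gamma\nabla f(x^k))$; $Q_k=I-\gamma\nabla^2f(x^k)$, $B_k=\gamma^{-1}Q_k(I-P_kQ_k)$; stop if $R_\gamma(x^k)=0$ and $\lambda_{\min}(B_k)\ge0$; $d^k$ is an (approximate) solution of $\min_d m_k(d):=\varphi_\gamma(x^k)+\langle\nabla\varphi_\gamma(x^k),d\rangle+\frac12\langle B_kd,d\rangle$ s.t. $\|d\|\le\delta_k$; $\rho_k=\frac{\varphi_\gamma(x^k)-\varphi_\gamma(x^k+d^k)}{m_k(0)-m_k(d^k)}$; $x^{k+1}=x^k$ if $\rho_k<\mu_1$, else $x^k+d^k$; $\delta_{k+1}=c_1\delta_k$ if $\rho_k<\mu_1$, $c_2\delta_k$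 if $\mu_1\le\rho_k<\mu_2$, $c_3\delta_k$ if $\rho_k\ge\mu_2$. *)

(* Defs.v *)
From HB Require Import structures.
From mathcomp Require Import all_boot all_order all_algebra.
From mathcomp Require Import all_classical all_reals all_analysis.
Set Implicit Arguments. Unset Strict Implicit. Unset Printing Implicit Defensive.
Import Order.TTheory GRing.Theory Num.Theory.
Local Open Scope classical_set_scope.
Local Open Scope ring_scope.

Section Defs.
Context {R : realType} {n : nat}.
Local Notation vec := 'cV[R]_n.
Local Notation mat := 'M[R]_n.

Definition dot (u v : vec) : R := (u^T *m v) 0 0.
Definition enorm (u : vec) : R := Num.sqrt (dot u u).

Definition opnorm (A : mat) : R :=
  sup [set enorm (A *m v) | v in [set v : vec | enorm v <= 1]].

Definition is_grad (F : vec -> R) (x v : vec) : Prop :=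
  forall e : R, 0 < e -> exists d : R, 0 < d /\ forall y : vec,
    enorm (y - x) < d -> `|F y - F x - dot v (y - x)| <= e * enorm (y - x).

Definition is_jac (F : vec -> vec) (x : vec) (J : mat) : Prop :=
  forall e : R, 0 < e -> exists d : R, 0 < d /\ forall y : vec,
    enorm (y - x) < d -> enorm (F y - F x - J *m (y - x)) <= e * enorm (y - x).

(* the gradient / Jacobian (chosen; unique when it exists; 0 otherwise) *)
Definition grad (F : vec -> R) (x : vec) : vec :=
  match pselect (exists v, is_grad F x v) with
  | left h => projT1 (cid h) | right _ => 0 end.

Definition jac (F : vec -> vec) (x : vec) : mat :=
  match pselect (exists J, is_jac F x J) with
  | left h => projT1 (cid h) | right _ => 0 end.

Definition hess (F : vec -> R) (x : vec) : mat := jac (grad F) x.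

Definition C2plus (F : vec -> R) : Prop :=
  (forall x, exists v, is_grad F x v) /\
  (forall x, exists J, is_jac (grad F) x J) /\
  (forall x e, 0 < e -> exists d, 0 < d /\ forall y,
       enorm (y - x) < d -> opnorm (hess F y - hess F x) < e) /\
  (forall x, exists r K : R, 0 < r /\ forall y z,
       enorm (y - x) < r -> enorm (z - x) < r ->
       opnorm (hess F y - hess F z) <= K * enorm (y - z)).

Definition proper_fun (g : vec -> \bar R) : Prop :=
  (forall x, g x != -oo%E) /\ exists x, g x \is a fin_num.

Definition lsc (g : vec -> \bar R) : Prop :=
  forall (x : vec) (a : R), (a%:E < g x)%E ->
    exists d : R, 0 < d /\ forall y, enorm (y - x) < d -> (a%:E < g y)%E.

Definition convex_ext (h : vec -> \bar R) : Prop :=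
  forall (x y : vec) (t : R), 0 < t -> t < 1 ->
    (h (t *: x + (1 - t) *: y)%R <= t%:E * h x + (1 - t)%:E * h y)%E.

Definition weakly_convex (rho : R) (g : vec -> \bar R) : Prop :=
  convex_ext (fun x => (g x + (rho / 2 * enorm x ^+ 2)%R%:E)%E).

(* proximal mapping: the minimizer (chosen; unique in the setting of the theorem) *)
Definition is_prox (gam : R) (g : vec -> \bar R) (x z : vec) : Prop :=
  forall u, (g z + (enorm (z - x) ^+ 2 / (2 * gam))%:E
             <= g u + (enorm (u - x) ^+ 2 / (2 * gam))%:E)%E.

Definition prox (gam : R) (g : vec -> \bar R) (x : vec) : vec :=
  match pselect (exists z, is_prox gam g x z) with
  | left h => projT1 (cid h) | right _ => 0 end.

Definition differentiable_at (F : vec -> vec) (x : vec) : Prop :=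
  exists J, is_jac F x J.

Definition bouligand_jac (F : vec -> vec) (z : vec) : set mat :=
  [set J : mat | exists zs : nat -> vec,
     (forall j, differentiable_at F (zs j)) /\
     (forall e : R, 0 < e -> exists N, forall j, (N <= j)%N -> enorm (zs j - z) < e) /\
     (forall (i k : 'I_n) (e : R), 0 < e -> exists N, forall j, (N <= j)%N ->
        `|jac F (zs j) i k - J i k| < e)].

Definition conv_hull (S : set mat) : set mat :=
  [set A | exists (m : nat) (w : 'I_m -> R) (B : 'I_m -> mat),
     (forall i, 0 <= w i) /\ \sum_(i < m) w i = 1 /\ (forall i, S (B i)) /\
     A = \sum_(i < m) w i *: B i].

Definition clarke_jac (F : vec -> vec) (z : vec) : set mat :=
  conv_hull (bouligand_jac F z).

Definition Rgam (f : vec -> R) (g : vec -> \bar R) (gam : R) (x : vec) : vec :=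
  gam^-1 *: (x - prox gam g (x - gam *: grad f x)).

Definition FBE_ext (f : vec -> R) (g : vec -> \bar R) (gam : R) (x : vec) : \bar R :=
  ereal_inf (range (fun u : vec =>
     ((f x + dot (grad f x) (u - x))%:E + g u
      + (enorm (u - x) ^+ 2 / (2 * gam))%:E)%E)).

(* real-valued FBE (finite in the setting of the theorem) *)
Definition FBE (f : vec -> R) (g : vec -> \bar R) (gam : R) (x : vec) : R :=
  fine (FBE_ext f g gam x).

Definition Qmat (f : vec -> R) (gam : R) (x : vec) : mat := 1%:M - gam *: hess f x.

Definition Bmat (f : vec -> R) (gam : R) (x : vec) (P : mat) : mat :=
  gam^-1 *: (Qmat f gam x *m (1%:M - P *m Qmat f gam x)).

Definition model (f : vec -> R) (g : vec -> \bar R) (gam : R) (x : vec) (B : mat)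
  (d : vec) : R :=
  FBE f g gam x + dot (grad (FBE f g gam) x) d + 1/2 * dot (B *m d) d.

(* min{delta, a/b}, with a/0 read as +infinity *)
Definition min_ratio (delta a b : R) : R :=
  if b == 0 then delta else Num.min delta (a / b).

End Defs.

(* Main.v *)
Require Import Defs.
From HB Require Import structures.
From mathcomp Require Import all_boot all_order all_algebra.
From mathcomp Require Import all_classical all_reals all_analysis.
From mathcomp Require Import ring lra.
Import Order.TTheory GRing.Theory Num.Theory.
Import numFieldNormedType.Exports.
Local Open Scope classical_set_scope.
Local Open Scope ring_scope.
Section LA.
Context {R : realType} {n : nat}.
Local Notation vec := 'cV[R]_n.
Local Notation mat := 'M[R]_n.
Implicit Types (u v w : vec) (A : mat).

Lemma dotE u v : dot u v = \sum_i u i 0 * v i 0.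
Proof. by rewrite /dot !mxE; apply: eq_bigr => i _; rewrite mxE. Qed.

Lemma dotC u v : dot u v = dot v u.
Proof. by rewrite !dotE; apply: eq_bigr => i _; rewrite mulrC. Qed.

Lemma dotDl u v w : dot (u + v) w = dot u w + dot v w.
Proof. by rewrite !dotE -big_split; apply: eq_bigr => i _; rewrite !mxE mulrDl. Qed.

Lemma dotDr u v w : dot w (u + v) = dot w u + dot w v.
Proof. by rewrite dotC dotDl !(dotC w). Qed.

Lemma dotZl a u v : dot (a *: u) v = a * dot u v.
Proof. by rewrite !dotE mulr_sumr; apply: eq_bigr => i _; rewrite !mxE mulrA. Qed.

Lemma dotZr a u v : dot u (a *: v) = a * dot u v.
Proof. by rewrite dotC dotZl dotC. Qed.

Lemma dotNl u v : dot (- u) v = - dot u v.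
Proof. by rewrite -scaleN1r dotZl mulN1r. Qed.

Lemma dotNr u v : dot u (- v) = - dot u v.
Proof. by rewrite dotC dotNl dotC. Qed.

Lemma dotBl u v w : dot (u - v) w = dot u w - dot v w.
Proof. by rewrite dotDl dotNl. Qed.

Lemma dotBr u v w : dot w (u - v) = dot w u - dot w v.
Proof. by rewrite dotDr dotNr. Qed.

Lemma dot0l u : dot 0 u = 0.
Proof. by rewrite -(scale0r (0 : vec)) dotZl mul0r. Qed.

Lemma dot0r u : dot u 0 = 0.
Proof. by rewrite dotC dot0l. Qed.

Lemma dot_ge0 u : 0 <= dot u u.
Proof. by rewrite dotE; apply: sumr_ge0 => i _; rewrite -expr2 sqr_ge0. Qed.

Lemma dot_eq0 u : dot u u = 0 -> u = 0.
Proof.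
rewrite dotE => /eqP; rewrite psumr_eq0; last by move=> i _; rewrite -expr2 sqr_ge0.
move=> /allP H; apply/matrixP => i j; rewrite ord1 mxE.
have := H i (mem_index_enum i); rewrite -expr2 sqrf_eq0 => /eqP ->//.
Qed.

Lemma enorm_ge0 u : 0 <= enorm u.
Proof. exact: sqrtr_ge0. Qed.

Lemma enorm_sq u : enorm u ^+ 2 = dot u u.
Proof. by rewrite /enorm sqr_sqrtr // dot_ge0. Qed.

Lemma enorm0 : enorm (0 : vec) = 0.
Proof. by rewrite /enorm dot0l sqrtr0. Qed.

Lemma enormZ a u : enorm (a *: u) = `|a| * enorm u.
Proof.
by rewrite /enorm dotZl dotZr mulrA -expr2 sqrtrM ?sqr_ge0 // sqrtr_sqr.
Qed.

Lemma enormN u : enorm (- u) = enorm u.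
Proof. by rewrite -scaleN1r enormZ normrN normr1 mul1r. Qed.

Lemma enormB u v : enorm (u - v) = enorm (v - u).
Proof. by rewrite -enormN opprB. Qed.

Lemma CS u v : `|dot u v| <= enorm u * enorm v.
Proof.
have key : dot u v ^+ 2 <= dot u u * dot v v.
  have [v0|vn0] := eqVneq (dot v v) 0.
    by rewrite (dot_eq0 v v0) dot0r dot0r expr0n /= mulr0.
  have vp : 0 < dot v v by rewrite lt_def vn0 dot_ge0.
  pose t := dot u v / dot v v.
  have := dot_ge0 (u - t *: v).
  rewrite dotBl !dotBr !dotZl !dotZr (dotC v u).
  have -> : dot u u - t * dot u v - (t * dot u v - t * (t * dot v v))
     = dot u u - dot u v ^+ 2 / dot v v.
    rewrite /t; field; exact: vn0.
  by rewrite subr_ge0 ler_pdivrMr.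
rewrite -(sqrtr_sqr (dot u v)) /enorm -sqrtrM ?dot_ge0 //.
by rewrite ler_sqrt // mulr_ge0 ?dot_ge0.
Qed.

Lemma dot_le u v : dot u v <= enorm u * enorm v.
Proof. exact: le_trans (ler_norm _) (CS u v). Qed.

Lemma enormD u v : enorm (u + v) <= enorm u + enorm v.
Proof.
rewrite -ler_sqr ?nnegrE ?addr_ge0 ?enorm_ge0 //.
rewrite enorm_sq dotDl !dotDr (dotC v u) sqrrD !enorm_sq.
have := dot_le u v; lra.
Qed.

Lemma enormDB u v w : enorm (u - w) <= enorm (u - v) + enorm (v - w).
Proof. by have := enormD (u - v) (v - w); rewrite addrA subrK. Qed.

Lemma coord_le u i : `|u i 0| <= enorm u.
Proof.
rewrite -ler_sqr ?nnegrE ?enorm_ge0 // enorm_sq real_normK ?num_real //.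
rewrite dotE (bigD1 i) //= -expr2 lerDl; apply: sumr_ge0 => j _.
by rewrite -expr2 sqr_ge0.
Qed.

Lemma enorm_lt u e : 0 < e -> dot u u < e ^+ 2 -> enorm u < e.
Proof.
move=> e0 h; rewrite -ltr_sqr ?nnegrE ?enorm_ge0 ?ltW // enorm_sq //.
Qed.

Lemma dot_mulmx A u v : dot (A *m u) v = dot u (A^T *m v).
Proof. by rewrite /dot trmx_mul mulmxA. Qed.

Definition frob A : R := \sum_i \sum_j A i j ^+ 2.

Lemma frob_ge0 A : 0 <= frob A.
Proof. by apply: sumr_ge0 => i _; apply: sumr_ge0 => j _; apply: sqr_ge0. Qed.

Lemma mulmx_bound A v : dot (A *m v) (A *m v) <= frob A * dot v v.
Proof.
rewrite dotE /frob mulr_suml; apply: ler_sum => i _.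
pose r : vec := \col_j A i j.
have -> : (A *m v) i 0 = dot r v.
  by rewrite mxE dotE; apply: eq_bigr => j _; rewrite mxE.
have -> : \sum_j A i j ^+ 2 = dot r r.
  by rewrite dotE; apply: eq_bigr => j _; rewrite mxE expr2.
rewrite -expr2 -(enorm_sq r) -(enorm_sq v) -exprMn.
rewrite -[X in X <= _]real_normK ?num_real //.
by rewrite ler_sqr ?nnegrE ?normr_ge0 ?mulr_ge0 ?enorm_ge0 // CS.
Qed.

Lemma opnorm_has_ub A :
  has_ubound [set enorm (A *m v) | v in [set v : vec | enorm v <= 1]].
Proof.
exists (Num.sqrt (frob A)) => _ [v /= v1 <-].
rewrite /enorm ler_sqrt ?frob_ge0 //.
apply: le_trans (mulmx_bound A v) _.
rewrite -[X in _ <= X]mulr1 ler_wpM2l ?frob_ge0 //.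
rewrite -enorm_sq; rewrite -[1](expr1n _ 2).
by rewrite ler_sqr ?nnegrE ?enorm_ge0.
Qed.

Lemma opnorm_ge0 A : 0 <= opnorm A.
Proof.
apply: le_trans (ub_le_sup (opnorm_has_ub A) _).
  exact: (enorm_ge0 (A *m 0)).
by exists 0 => //=; rewrite enorm0.
Qed.

Lemma opnorm_ub A v : enorm (A *m v) <= opnorm A * enorm v.
Proof.
have [v0|vn0] := eqVneq (enorm v) 0.
  have : dot v v = 0 by rewrite -enorm_sq v0 expr0n.
  by move/(dot_eq0 v) => ->; rewrite mulmx0 enorm0 mulr0.
have vp : 0 < enorm v by rewrite lt_def vn0 enorm_ge0.
pose w := (enorm v)^-1 *: v.
have w1 : enorm w <= 1.
  by rewrite /w enormZ ger0_norm ?invr_ge0 ?enorm_ge0 // mulVf.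
have := ub_le_sup (opnorm_has_ub A) (ex_intro2 _ _ w w1 erefl).
rewrite /w -scalemxAr enormZ ger0_norm ?invr_ge0 ?enorm_ge0 //.
by rewrite -/(opnorm A) mulrC -ler_pdivlMr ?invr_gt0 // invrK.
Qed.

Lemma dotB_bound A d : `|dot (A *m d) d| <= opnorm A * enorm d ^+ 2.
Proof.
apply: le_trans (CS _ _) _.
by rewrite expr2 mulrA ler_wpM2r ?enorm_ge0 ?opnorm_ub.
Qed.

End LA.
Section Calc.
Context {R : realType}.

Definition hasder (h hd : R -> R) := forall t e, 0 < e -> exists del, 0 < del /\
  forall s, `|s - t| < del -> `|h s - h t - hd t * (s - t)| <= e * `|s - t|.

Lemma hasder_is_derive {h hd : R -> R} (t : R) : hasder h hd -> is_derive t 1 h (hd t).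
Proof.
move=> H.
have L : (fun s : R => s^-1 *: ((h \o shift t) (s *: (1:R)) - h t)) @ (0:R)^' --> hd t.
  apply/cvgrPdist_le => e e0.
  have [del [del0 Hd]] := H t e e0.
  near=> s.
  have s0 : s != 0 by near: s; exact: nbhs_dnbhs_neq.
  have sd : `|s| < del by near: s; exact: dnbhs0_lt.
  have := Hd (s + t); rewrite addrK => /(_ sd) Hs.
  rewrite /= /shift -[s%:A]/(s * 1) mulr1 -[s^-1 *: _]/(s^-1 * _).
  have sp : 0 < `|s| by rewrite normr_gt0.
  have -> : hd t - s^-1 * (h (s + t) - h t) = - (s^-1 * (h (s + t) - h t - hd t * s)).
    by field.
  by rewrite normrN normrM normfV mulrC ler_pdivrMr.
apply: DeriveDef; first exact: (cvgP _ L).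
exact: (cvg_lim _ L).
Unshelve. all: by end_near. Qed.

Lemma hasder_quad {h hd : R -> R} a b : hasder h hd ->
  hasder (fun t => h t - a * t - b * t ^+ 2) (fun t => hd t - a - 2 * b * t).
Proof.
move=> H t e e0.
have e20 : 0 < e / 2 by rewrite divr_gt0.
have [del [del0 Hd]] := H t (e / 2) e20.
have b0 : 0 < 2 * (`|b| + 1) by rewrite mulr_gt0 // ltr_pwDr.
exists (Num.min del (e / (2 * (`|b| + 1)))); split.
  by rewrite lt_min del0 divr_gt0.
move=> s; rewrite lt_min => /andP[sd se].
have := Hd s sd.
have -> : h s - a * s - b * s ^+ 2 - (h t - a * t - b * t ^+ 2) -
  (hd t - a - 2 * b * t) * (s - t) =
  (h s - h t - hd t * (s - t)) - b * (s - t) ^+ 2 by ring.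
move=> Hs.
apply: le_trans (ler_normB _ _) _.
have : `|b * (s - t) ^+ 2| <= e / 2 * `|s - t|.
  rewrite normrM normrX.
  have q0 := normr_ge0 (s - t); have bq := normr_ge0 b.
  move: se; rewrite ltr_pdivlMr // => se.
  nra.
move: Hs; lra.
Qed.

Lemma hasder_cont {h hd : R -> R} : hasder h hd -> continuous h.
Proof.
move=> H x; apply: differentiable_continuous; apply/derivable1_diffP.
by have := hasder_is_derive x H => -[].
Qed.

Lemma mvt_quad {h hd : R -> R} {b : R} : hasder h hd ->
  (forall t, 0 <= t <= 1 -> hd t - hd 0 <= 2 * b * t) ->
  h 1 - h 0 - hd 0 <= b.
Proof.
move=> H Hb.
have Hk := hasder_quad (hd 0) b H.
have [c cI] := MVT (@ltr01 R) (fun x _ => hasder_is_derive x Hk)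
  (continuous_subspaceT (hasder_cont Hk)).
rewrite subr0 mulr1 expr1n expr0n /= mulr1 !mulr0 !subr0 => E.
have : 0 <= c <= 1 by move: cI; rewrite in_itv /= => /andP[/ltW -> /ltW ->].
move/Hb; move: E; lra.
Qed.

End Calc.
Section VecCalc.
Context {R : realType} {n : nat}.
Local Notation vec := 'cV[R]_n.
Local Notation mat := 'M[R]_n.

Lemma grad_spec (F : vec -> R) y : (exists v, is_grad F y v) -> is_grad F y (grad F y).
Proof. by rewrite /grad; case: pselect => // h _; exact: (projT2 (cid h)). Qed.

Lemma grad_nz (F : vec -> R) y : grad F y != 0 -> is_grad F y (grad F y).
Proof. by rewrite /grad; case: pselect => [h _|_]; [exact: (projT2 (cid h))|rewrite eqxx]. Qed.

Lemma jac_spec (G : vec -> vec) y : (exists J, is_jac G y J) -> is_jac G y (jac G y).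
Proof. by rewrite /jac; case: pselect => // h _; exact: (projT2 (cid h)). Qed.

Lemma diff_line (x d : vec) (s t : R) : (x + s *: d) - (x + t *: d) = (s - t) *: d.
Proof. by rewrite scalerBl opprD addrACA subrr add0r. Qed.

Lemma hasder_grad (F : vec -> R) (x d : vec) : (forall y, is_grad F y (grad F y)) ->
  hasder (fun t => F (x + t *: d)) (fun t => dot (grad F (x + t *: d)) d).
Proof.
move=> HG t e e0.
have d1 : 0 < enorm d + 1 by rewrite ltr_pwDr ?enorm_ge0.
have [dl [dl0 Hd]] := HG (x + t *: d) (e / (enorm d + 1)) (divr_gt0 e0 d1).
exists (dl / (enorm d + 1)); split; first exact: divr_gt0.
move=> s sd.
have := Hd (x + s *: d); rewrite diff_line enormZ dotZr.
have hlt : `|s - t| * enorm d < dl.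
  move: sd; rewrite ltr_pdivlMr // => sd; apply: le_lt_trans sd.
  by rewrite ler_wpM2l ?normr_ge0 // lerDl.
move=> /(_ hlt); rewrite mulrC => H1; apply: le_trans H1 _.
have a1 : enorm d / (enorm d + 1) <= 1 by rewrite ler_pdivrMr // mul1r lerDl.
have -> : e / (enorm d + 1) * (`|s - t| * enorm d) = (e * `|s - t|) * (enorm d / (enorm d + 1)).
  by ring.
by rewrite -[X in _ <= X]mulr1 ler_wpM2l // mulr_ge0 ?(ltW e0) ?normr_ge0.
Qed.

Lemma hasder_jac (G : vec -> vec) (x d w : vec) : (forall y, is_jac G y (jac G y)) ->
  hasder (fun t => dot (G (x + t *: d)) w) (fun t => dot (jac G (x + t *: d) *m d) w).
Proof.
move=> HG t e e0.
have d1 : 0 < (enorm d + 1) * (enorm w + 1) by rewrite mulr_gt0 // ltr_pwDr ?enorm_ge0.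
have [dl [dl0 Hd]] := HG (x + t *: d) (e / ((enorm d + 1) * (enorm w + 1))) (divr_gt0 e0 d1).
exists (dl / (enorm d + 1)); split; first by rewrite divr_gt0 // ltr_pwDr ?enorm_ge0.
move=> s sd.
have hlt : `|s - t| * enorm d < dl.
  move: sd; rewrite ltr_pdivlMr ?ltr_pwDr ?enorm_ge0 // => sd; apply: le_lt_trans sd.
  by rewrite ler_wpM2l ?normr_ge0 // lerDl.
have := Hd (x + s *: d); rewrite diff_line enormZ => /(_ hlt) H1.
set D := G (x + s *: d) - G (x + t *: d) - jac G (x + t *: d) *m ((s - t) *: d) in H1.
have -> : dot (G (x + s *: d)) w - dot (G (x + t *: d)) w -
   dot (jac G (x + t *: d) *m d) w * (s - t) = dot D w.
  by rewrite /D !dotBl -scalemxAr dotZl mulrC.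
apply: le_trans (CS _ _) _.
apply: le_trans (ler_wpM2r (enorm_ge0 w) H1) _.
have ew : enorm w <= enorm w + 1 by rewrite lerDl.
have ed : enorm d <= enorm d + 1 by rewrite lerDl.
have := enorm_ge0 w; have := enorm_ge0 d; have := normr_ge0 (s - t).
move: d1 e0 ew ed.
set a := enorm d; set b := enorm w; set c := `|s - t|.
move=> d1 e0 ew ed c0 a0 b0.
have a1 : a / (a + 1) <= 1 by rewrite ler_pdivrMr ?mul1r ?lerDl // ltr_pwDr.
have b1 : b / (b + 1) <= 1 by rewrite ler_pdivrMr ?mul1r ?lerDl // ltr_pwDr.
have a2 : 0 <= a / (a + 1) by rewrite divr_ge0 // addr_ge0.
have b2 : 0 <= b / (b + 1) by rewrite divr_ge0 // addr_ge0.
have -> : e / ((a + 1) * (b + 1)) * (c * a) * b = (e * c) * (a / (a + 1) * (b / (b + 1))).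
  by field; apply/andP; split; rewrite gt_eqF // ltr_pwDr.
rewrite -[X in _ <= X]mulr1 ler_wpM2l ?mulr_ge0 ?(ltW e0) //.
exact: mulr_ile1.
Qed.

End VecCalc.
Lemma hasder_opp {R : realType} {h hd : R -> R} : hasder h hd ->
  hasder (fun t => - h t) (fun t => - hd t).
Proof.
move=> H t e e0; have [dl [dl0 Hd]] := H t e e0; exists dl; split => // s /Hd.
by rewrite -normrN; congr (`|_| <= _); ring.
Qed.

Section Descent.
Context {R : realType} {n : nat}.
Local Notation vec := 'cV[R]_n.
Local Notation mat := 'M[R]_n.

Lemma line0 (x d : vec) : x + 0 *: d = x.
Proof. by rewrite scale0r addr0. Qed.
Lemma line1 (x d : vec) : x + 1 *: d = x + d.
Proof. by rewrite scale1r. Qed.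

Lemma descent_abs (f : vec -> R) L :
  (forall y, is_grad f y (grad f y)) ->
  (forall y z, enorm (grad f y - grad f z) <= L * enorm (y - z)) ->
  forall x y, `|f y - f x - dot (grad f x) (y - x)| <= L / 2 * enorm (y - x) ^+ 2.
Proof.
move=> HG HL x y; set d := y - x.
have Hh := hasder_grad f x d HG.
have Hb : forall t, 0 <= t <= 1 ->
    `|dot (grad f (x + t *: d)) d - dot (grad f (x + 0 *: d)) d| <= 2 * (L / 2 * enorm d ^+ 2) * t.
  move=> t /andP[t0 t1]; rewrite line0 -dotBl.
  apply: le_trans (CS _ _) _.
  apply: le_trans (ler_wpM2r (enorm_ge0 d) (HL _ _)) _.
  rewrite addrC addKr enormZ ger0_norm //.
  have -> : 2 * (L / 2 * enorm d ^+ 2) * t = L * (t * enorm d) * enorm d by rewrite expr2; field.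
  done.
have E1 := mvt_quad Hh (fun t ht => le_trans (ler_norm _) (Hb t ht)).
have Hb2 : forall t, 0 <= t <= 1 -> - dot (grad f (x + t *: d)) d - - dot (grad f (x + 0 *: d)) d
   <= 2 * (L / 2 * enorm d ^+ 2) * t.
  move=> t ht; apply: le_trans (Hb t ht); rewrite -normrN.
  by apply: le_trans (ler_norm _); rewrite opprB opprK addrC.
have E2 := mvt_quad (hasder_opp Hh) Hb2.
move: E1 E2; rewrite /= !line0 !line1.
have -> : x + d = y by rewrite /d addrC subrK.
rewrite ler_norml => E1 E2; apply/andP; split; last exact: E1.
by rewrite lerNl; apply: le_trans E2; rewrite le_eqVlt; apply/orP; left; apply/eqP; ring.
Qed.

Lemma hess_mid (f : vec -> R) (x d w : vec) (K : R) :
  (forall y, is_jac (grad f) y (jac (grad f) y)) ->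
  (forall t, 0 <= t <= 1 -> opnorm (hess f (x + t *: d) - hess f x) <= K * t * enorm d) ->
  dot (grad f (x + d)) w - dot (grad f x) w <= dot (hess f x *m d) w + K / 2 * enorm d ^+ 2 * enorm w.
Proof.
move=> HJ HK.
have Hh := hasder_jac (grad f) x d w HJ.
have Hb : forall t, 0 <= t <= 1 ->
    dot (jac (grad f) (x + t *: d) *m d) w - dot (jac (grad f) (x + 0 *: d) *m d) w
    <= 2 * (K / 2 * enorm d ^+ 2 * enorm w) * t.
  move=> t ht; rewrite line0 -dotBl -mulmxBl.
  apply: le_trans (dot_le _ _) _.
  apply: le_trans (ler_wpM2r (enorm_ge0 w) (opnorm_ub _ _)) _.
  apply: le_trans (ler_wpM2r (enorm_ge0 w) (ler_wpM2r (enorm_ge0 d) (HK t ht))) _.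
  have -> : 2 * (K / 2 * enorm d ^+ 2 * enorm w) * t = K * t * enorm d * enorm d * enorm w
    by rewrite expr2; field.
  done.
have := mvt_quad Hh Hb.
rewrite /= !line0 !line1 => E.
rewrite /hess; lra.
Qed.

End Descent.
Lemma fin_between {R : realType} (a b : R) (X : \bar R) :
  (a%:E <= X)%E -> (X <= b%:E)%E -> X = (fine X)%:E.
Proof. by case: X. Qed.

Section FBE.
Context {R : realType} {n : nat}.
Local Notation vec := 'cV[R]_n.
Variables (f : vec -> R) (g : vec -> \bar R) (gam L : R) (x1 xs : vec).
Hypothesis HG : forall y, is_grad f y (grad f y).
Hypothesis HL : forall y z, enorm (grad f y - grad f z) <= L * enorm (y - z).
Hypothesis gnN : forall y, g y != -oo%E.
Hypothesis gx1 : g x1 \is a fin_num.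
Hypothesis Hxs : forall y, ((f xs)%:E + g xs <= (f y)%:E + g y)%E.
Hypothesis gam0 : 0 < gam.
Hypothesis gamL : gam * L < 1.

Definition ell (y u : vec) (gu : R) : R :=
  f y + dot (grad f y) (u - y) + gu + enorm (u - y) ^+ 2 / (2 * gam).

Definition mphi : R := fine ((f xs)%:E + g xs)%E.
Definition cc : R := 1 / (2 * gam) - L / 2.

Lemma cc_gt0 : 0 < cc.
Proof.
rewrite /cc subr_gt0.
have -> : L / 2 = (gam * L) / (2 * gam) by field; rewrite gt_eqF.
by rewrite ltr_pM2r ?invr_gt0 ?mulr_gt0.
Qed.

Lemma phixs_fin : ((f xs)%:E + g xs)%E = mphi%:E.
Proof.
rewrite /mphi; have := Hxs x1; have := gnN xs.
case: (g xs) => [r| |] //= _.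
by move: gx1; case: (g x1) => //= r; rewrite leye_eq.
Qed.

Lemma m_le {u gu} : g u = gu%:E -> mphi <= f u + gu.
Proof. by move=> gu_; have := Hxs u; rewrite phixs_fin gu_. Qed.

Lemma ell_lb y {u gu} : g u = gu%:E -> mphi + cc * enorm (u - y) ^+ 2 <= ell y u gu.
Proof.
move=> gu_; have h1 := m_le gu_.
have := descent_abs _ _ HG HL y u; rewrite ler_norml => /andP[_ h2].
have -> : cc * enorm (u - y) ^+ 2 = enorm (u - y) ^+ 2 / (2 * gam) - L / 2 * enorm (u - y) ^+ 2.
  by rewrite /cc; field; rewrite gt_eqF.
rewrite /ell; lra.
Qed.

Definition term (y u : vec) : \bar R :=
  ((f y + dot (grad f y) (u - y))%:E + g u + (enorm (u - y) ^+ 2 / (2 * gam))%:E)%E.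

Lemma term_fin y {u gu} : g u = gu%:E -> term y u = (ell y u gu)%:E.
Proof. by move=> gu_; rewrite /term gu_. Qed.

Lemma term_ge y u : (mphi%:E <= term y u)%E.
Proof.
move: (gnN u); case E: (g u) => [gu| |] // _.
  rewrite (term_fin y E) lee_fin; apply: le_trans (ell_lb y E).
  by rewrite lerDl mulr_ge0 ?sqr_ge0 ?(ltW cc_gt0).
by rewrite /term E /= leey.
Qed.

Lemma FBE_fin y : FBE_ext f g gam y = (FBE f g gam y)%:E.
Proof.
rewrite /FBE; apply: (@fin_between _ mphi (ell y x1 (fine (g x1)))).
  by apply: le_ereal_inf_tmp => _ [u _ <-]; exact: term_ge.
rewrite -term_fin ?fineK //.
by apply: ereal_inf_lbound; exists x1.
Qed.

Lemma psi_le y {u gu} : g u = gu%:E -> FBE f g gam y <= ell y u gu.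
Proof.
move=> gu_; rewrite -lee_fin -FBE_fin -(term_fin y gu_).
by apply: ereal_inf_lbound; exists u.
Qed.

Lemma psi_ge y : mphi <= FBE f g gam y.
Proof.
rewrite -lee_fin -FBE_fin.
by apply: le_ereal_inf_tmp => _ [u _ <-]; exact: term_ge.
Qed.

Lemma psi_approx y {eta} : 0 < eta ->
  exists u gu, g u = gu%:E /\ ell y u gu < FBE f g gam y + eta.
Proof.
move=> eta0.
have : (FBE_ext f g gam y < (FBE f g gam y + eta)%:E)%E.
  by rewrite FBE_fin lte_fin ltrDl.
move=> /ereal_inf_lt [_ [u _ <-]]; rewrite -/(term y u).
move: (gnN u); case E: (g u) => [gu| |] // _.
  by rewrite (term_fin y E) lte_fin => h; exists u, gu.
by rewrite /term E.
Qed.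

Hypothesis HJ : forall y, is_jac (grad f) y (jac (grad f) y).

Lemma enormBsq (a b : vec) : enorm (a - b) ^+ 2 = enorm a ^+ 2 - 2 * dot a b + enorm b ^+ 2.
Proof. by rewrite !enorm_sq dotBl !dotBr (dotC b a); ring. Qed.

Lemma ell_ub (x d u : vec) gu K :
  (forall t, 0 <= t <= 1 -> opnorm (hess f (x + t *: d) - hess f x) <= K * t * enorm d) ->
  ell (x + d) u gu <= ell x u gu + (dot (hess f x *m d) (u - x) - dot (u - x) d / gam)
     + (L / 2 + K * enorm (u - x) / 2 + 1 / (2 * gam)) * enorm d ^+ 2.
Proof.
move=> HK.
have h1 := descent_abs _ _ HG HL (x + d) x.
have h2 := hess_mid f x d (u - x) K HJ HK.
have e1 : x - (x + d) = - d by rewrite opprD addrA subrr add0r.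
have e2 : u - (x + d) = (u - x) - d by rewrite opprD addrA.
rewrite e1 dotNr enormN in h1.
move: h1; rewrite ler_norml => /andP[h1 _].
rewrite /ell e2 dotBr enormBsq.
have e3 : enorm (u - x) ^+ 2 / (2 * gam) - 2 * dot (u - x) d / (2 * gam) + enorm d ^+ 2 / (2 * gam)
   = enorm (u - x) ^+ 2 / (2 * gam) - dot (u - x) d / gam + 1 / (2 * gam) * enorm d ^+ 2.
  by field; rewrite gt_eqF.
have e4 : (enorm (u - x) ^+ 2 - 2 * dot (u - x) d + enorm d ^+ 2) / (2 * gam)
   = enorm (u - x) ^+ 2 / (2 * gam) - 2 * dot (u - x) d / (2 * gam) + enorm d ^+ 2 / (2 * gam).
  by ring.
rewrite e4 e3.
have e5 : (L / 2 + K * enorm (u - x) / 2 + 1 / (2 * gam)) * enorm d ^+ 2 =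
   L / 2 * enorm d ^+ 2 + K / 2 * enorm d ^+ 2 * enorm (u - x) + 1 / (2 * gam) * enorm d ^+ 2.
  by ring.
rewrite e5; lra.
Qed.

End FBE.

Lemma semiconc {R : realType} {n : nat} (f : 'cV[R]_n -> R) (g : 'cV[R]_n -> \bar R) (gam L : R) (x1 xs : 'cV[R]_n)
  (HG : forall y, is_grad f y (grad f y))
  (HL : forall y z, enorm (grad f y - grad f z) <= L * enorm (y - z))
  (gnN : forall y, g y != -oo%E) (gx1 : g x1 \is a fin_num)
  (Hxs : forall y, ((f xs)%:E + g xs <= (f y)%:E + g y)%E)
  (gam0 : 0 < gam) (gamL : gam * L < 1)
  (HJ : forall y, is_jac (grad f) y (jac (grad f) y))
  (x G : 'cV[R]_n) (K Rw D0 : R) :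
  0 <= L -> is_grad (FBE f g gam) x G -> 0 <= K ->
  (forall u gu, g u = gu%:E -> ell f gam x u gu <= FBE f g gam x + 1 -> enorm (u - x) <= Rw) ->
  (forall d', enorm d' <= D0 -> forall t, 0 <= t <= 1 ->
      opnorm (hess f (x + t *: d') - hess f x) <= K * t * enorm d') ->
  forall d, enorm d <= D0 ->
  FBE f g gam (x + d) <= FBE f g gam x + dot G d + (L / 2 + K * Rw / 2 + 1 / (2 * gam)) * enorm d ^+ 2.
Proof.
move=> L0 Hgr K0 HRw HH d dD.
have PA : forall y eta, 0 < eta -> exists u gu, g u = gu%:E /\ ell f gam y u gu < FBE f g gam y + eta
  := fun y eta => @psi_approx _ _ f g gam L x1 xs HG HL gnN gx1 Hxs gam0 gamL y eta.
have PL : forall y u gu, g u = gu%:E -> FBE f g gam y <= ell f gam y u gu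
  := fun y u gu => @psi_le _ _ f g gam L x1 xs HG HL gnN gx1 Hxs gam0 gamL y u gu.
have EU := @ell_ub _ _ f gam L HG HL gam0 HJ.
set psi := FBE f g gam.
set C := L / 2 + K * Rw / 2 + 1 / (2 * gam).
set nd := enorm d.
rewrite leNgt; apply/negP => Hlt.
have nd0 : 0 <= nd := enorm_ge0 d.
set eta := psi (x + d) - psi x - dot G d - C * nd ^+ 2.
have eta0 : 0 < eta by rewrite /eta; clear -Hlt; lra.
have nd1 : 0 < nd + 1 by clear -nd0; lra.
have [u [gu [gu_ Hu0]]] := PA x 1 ltr01.
have Rw0 : 0 <= Rw.
  by apply: le_trans (enorm_ge0 (u - x)) (HRw u gu gu_ (ltW Hu0)).
have C0 : 0 <= C by rewrite /C !addr_ge0 ?divr_ge0 ?mulr_ge0 ?ler0n ?mulr_ge0 // ltW.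
have Cn0 : 0 < C * nd ^+ 2 + 1 by rewrite ltr_pwDr ?mulr_ge0 ?sqr_ge0.
have [dl [dl0 Hdl]] := Hgr (eta / (4 * (nd + 1))) (divr_gt0 eta0 (mulr_gt0 (ltr0n _ 4) nd1)).
pose t := Num.min (1 / 2) (Num.min (dl / (2 * (nd + 1))) (eta / (4 * (C * nd ^+ 2 + 1)))).
have t0 : 0 < t.
  by rewrite !lt_min !divr_gt0 ?mulr_gt0 //.
have t12 : t <= 1 / 2 by rewrite /t ge_min lexx.
have tdl : t <= dl / (2 * (nd + 1)) by rewrite /t !ge_min lexx orbT.
have tC : t <= eta / (4 * (C * nd ^+ 2 + 1)) by rewrite /t !ge_min lexx !orbT.
pose nu := Num.min (eta * t / 4) 1.
have nu0 : 0 < nu by rewrite lt_min ltr01 andbT divr_gt0 ?mulr_gt0.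
have nu1 : nu <= eta * t / 4 by rewrite ge_min lexx.
clear Hu0 gu_; have [{}u [{}gu [{}gu_ Hu]]] := PA x nu nu0.
have Hw : enorm (u - x) <= Rw.
  apply: HRw gu_ _; apply: ltW; apply: lt_le_trans Hu _.
  by rewrite lerD2l ge_min lexx orbT.
set w := u - x.
set Cw := L / 2 + K * enorm w / 2 + 1 / (2 * gam).
have CwC : Cw <= C by rewrite /Cw /C lerD2r lerD2l ler_pM2r // ler_wpM2l.
set lin := dot (hess f x *m d) w - dot w d / gam.
have hA : psi (x + d) <= ell f gam x u gu + lin + C * nd ^+ 2.
  apply: le_trans (PL (x + d) u gu gu_) _.
  apply: le_trans (EU x d u gu K (HH d dD)) _.
  by rewrite lerD2l ler_wpM2r ?sqr_ge0.
set d2 := (- t) *: d.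
have nd2 : enorm d2 = t * nd by rewrite /d2 enormZ normrN gtr0_norm.
have d2D : enorm d2 <= D0.
  rewrite nd2; apply: le_trans dD; rewrite -/nd.
  by rewrite -[X in _ <= X]mul1r ler_wpM2r //; clear -t12; lra.
have hB : psi (x + d2) <= ell f gam x u gu - t * lin + C * (t ^+ 2 * nd ^+ 2).
  apply: le_trans (PL (x + d2) u gu gu_) _.
  apply: le_trans (EU x d2 u gu K (HH d2 d2D)) _.
  have -> : dot (hess f x *m d2) (u - x) - dot (u - x) d2 / gam = - t * lin.
    by rewrite /d2 -scalemxAr dotZl dotZr /lin; ring.
  rewrite nd2 mulNr -exprMn; rewrite lerD2l ler_wpM2r ?sqr_ge0 //.
have hC : psi x - t * dot G d - eta * t / 4 <= psi (x + d2).
  have hlt : enorm (x + d2 - x) < dl.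
    rewrite addrC addKr nd2; apply: le_lt_trans (ler_wpM2r nd0 tdl) _.
    by rewrite mulrAC ltr_pdivrMr ?mulr_gt0 // ltr_pM2l //; clear -nd0; lra.
  have e : x + d2 - x = d2 by rewrite (addrC x d2) addrK.
  have := Hdl _ hlt; rewrite e nd2 /d2 dotZr ler_norml => /andP[h1 _].
  have : eta / (4 * (nd + 1)) * (t * nd) <= eta * t / 4.
    have -> : eta / (4 * (nd + 1)) * (t * nd) = eta * t / 4 * (nd / (nd + 1)) by field; clear -nd0; lra.
    rewrite -[X in _ <= X]mulr1 ler_wpM2l ?divr_ge0 ?mulr_ge0 ?ltW //.
    by rewrite ltr_pdivrMr // mul1r; clear -nd0; lra.
  rewrite -/psi in h1; clear -h1; lra.
have tt : C * (t ^+ 2 * nd ^+ 2) <= eta * t / 4.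
  have : t * (C * nd ^+ 2) <= t * (C * nd ^+ 2 + 1) by rewrite ler_pM2l // lerDl.
  have : t * (C * nd ^+ 2 + 1) <= eta / 4.
    by move: tC; rewrite ler_pdivlMr ?mulr_gt0 //; clear -t0; lra.
  move=> h1 h2.
  have -> : C * (t ^+ 2 * nd ^+ 2) = t * (t * (C * nd ^+ 2)) by ring.
  have -> : eta * t / 4 = t * (eta / 4) by ring.
  by rewrite ler_pM2l //; clear -h1 h2; lra.
have hlin : t * lin <= t * (dot G d + 3 * eta / 4).
  have : psi x - t * dot G d - eta * t / 4 <= ell f gam x u gu - t * lin + eta * t / 4 by clear -hB hC tt; lra.
  have : ell f gam x u gu <= psi x + eta * t / 4 by move: Hu; rewrite -/psi; clear -nu1; lra.
  move=> h1 h2.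
  have -> : t * (dot G d + 3 * eta / 4) = t * dot G d + 3 / 4 * (eta * t) by ring.
  clear -h1 h2; lra.
move: hlin; rewrite ler_pM2l // => hlin.
have : eta * t / 4 <= eta / 8.
  have -> : eta / 8 = eta * (1 / 2) / 4 by field.
  by rewrite ler_pM2r // ler_pM2l.
have etaE : eta = psi (x + d) - psi x - dot G d - C * nd ^+ 2 by [].
move: Hu; rewrite -/psi => Hu h8; clear -Hu h8 nu1 hA hlin etaE eta0; lra.
Qed.


Section Misc.
Context {R : realType}.

Lemma liminf_zero (u : nat -> R) : (forall k, 0 <= u k) ->
  (forall e, 0 < e -> forall K, exists k, (K <= k)%N /\ u k < e) ->
  limn_einf (fun k => (u k)%:E) = 0%E.
Proof.
move=> u0 H; rewrite limn_einf_lim.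
suff -> : einfs (fun k => (u k)%:E) = fun _ => 0%E by rewrite lim_cst.
apply: funext => K; rewrite /einfs /=.
have lb : (0 <= ereal_inf (sdrop (fun k => (u k)%:E) K))%E.
  by apply: le_ereal_inf_tmp => _ [k _ <-]; rewrite lee_fin.
apply/eqP; rewrite eq_le lb andbT.
have ub : forall e, 0 < e -> (ereal_inf (sdrop (fun k => (u k)%:E) K) < e%:E)%E.
  move=> e e0; have [k [Kk uk]] := H e e0 K.
  apply: le_lt_trans (_ : (u k)%:E < e%:E)%E; last by rewrite lte_fin.
  by apply: ereal_inf_lbound; exists k.
move: lb ub; case: (ereal_inf _) => [r| |] //=.
  rewrite !lee_fin => r0 ub; rewrite leNgt; apply/negP => rp.
  by have := ub r rp; rewrite lte_fin ltxx.
by move=> _ /(_ 1 ltr01).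
Qed.

Lemma bernoulli (c : R) (j : nat) : 1 <= c -> 1 + j%:R * (c - 1) <= c ^+ j.
Proof.
move=> c1; elim: j => [|j IH]; first by rewrite mul0r addr0 expr0.
rewrite exprS -natr1.
have cj : 1 <= c ^+ j by rewrite exprn_ege1.
have : c * (1 + j%:R * (c - 1)) <= c * c ^+ j by rewrite ler_wpM2l // (le_trans ler01).
have j0 : 0 <= j%:R :> R by rewrite ler0n.
nra.
Qed.

Lemma geo_big (c a b : R) : 1 < c -> 0 < a -> exists j : nat, b < c ^+ j * a.
Proof.
move=> c1 a0.
have ca : 0 < a * (c - 1) by rewrite mulr_gt0 // subr_gt0.
pose j := (Num.trunc (`|b| / (a * (c - 1)))).+1.
exists j.
have hj : `|b| / (a * (c - 1)) < j%:R by exact: truncnS_gt.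
have := bernoulli c j (ltW c1).
move: hj; rewrite ltr_pdivrMr // => hj hb.
have j0 : 0 <= j%:R :> R by rewrite ler0n.
have : b <= `|b| by exact: ler_norm.
nra.
Qed.

Lemma real_cauchy (a : nat -> R) :
  (forall e, 0 < e -> exists N, forall p q, (N <= p)%N -> (N <= q)%N -> `|a p - a q| < e) ->
  exists l, forall e, 0 < e -> exists N, forall k, (N <= k)%N -> `|a k - l| < e.
Proof.
move=> H.
have : cvg (a @ \oo).
  apply: cauchy_cvg; apply: cauchy_exP => e e0.
  have [N HN] := H e e0.
  exists (a N); exists N => // k Nk /=.
  by rewrite /ball /= -normrN opprB; apply: HN.
move=> /cvg_ex [l Hl]; exists l => e e0.
have := (cvgrPdist_lt _ _).1 Hl e e0.
move=> [N _ HN]; exists N => k Nk.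
by rewrite -normrN opprB; apply: HN.
Qed.

End Misc.

Section VecCauchy.
Context {R : realType} {n : nat}.
Local Notation vec := 'cV[R]_n.

Lemma vec_cauchy (y : nat -> vec) :
  (forall e, 0 < e -> exists N, forall p q, (N <= p)%N -> (N <= q)%N -> enorm (y p - y q) < e) ->
  exists ys, forall e, 0 < e -> exists N, forall k, (N <= k)%N -> enorm (y k - ys) < e.
Proof.
move=> H.
have Hi : forall i : 'I_n, exists l, forall e, 0 < e -> exists N, forall k, (N <= k)%N ->
    `|y k i 0 - l| < e.
  move=> i; apply: real_cauchy => e e0.
  have [N HN] := H e e0; exists N => p q Np Nq.
  apply: le_lt_trans (HN p q Np Nq).
  by have := coord_le (y p - y q) i; rewrite !mxE.
have [l Hl] := fin_all_exists Hi.
exists (\col_i l i) => e e0.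
pose eta := e / (n%:R + 1).
have n1 : 0 < n%:R + 1 :> R by rewrite ltr_pwDr ?ler0n.
have eta0 : 0 < eta by rewrite divr_gt0.
have HN : forall i, exists N, forall k, (N <= k)%N -> `|y k i 0 - l i| < eta.
  by move=> i; exact: Hl i eta eta0.
have [Nf HNf] := fin_all_exists HN.
exists (\max_i Nf i) => k Nk.
apply: enorm_lt => //.
rewrite dotE.
apply: (@le_lt_trans _ _ (\sum_(i < n) eta ^+ 2)).
  apply: ler_sum => i _; rewrite !mxE -expr2 -real_normK ?num_real //.
  rewrite ler_sqr ?nnegrE ?normr_ge0 ?(ltW eta0) //; apply: ltW; apply: HNf.
  by apply: leq_trans Nk; apply: (@leq_bigmax _ (fun i => Nf i)).
rewrite sumr_const card_ord /eta.
have e2 : 0 < e ^+ 2 by rewrite exprn_gt0.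
have -> : (e / (n%:R + 1)) ^+ 2 *+ n = e ^+ 2 * (n%:R / (n%:R + 1) ^+ 2).
  by rewrite -mulr_natr; field; rewrite gt_eqF.
rewrite -[X in _ < X]mulr1 ltr_pM2l // ltr_pdivrMr ?exprn_gt0 // mul1r.
have nn : 0 <= n%:R :> R by rewrite ler0n.
nra.
Qed.

End VecCauchy.

Theorem theoremA4 (R : realType) (n : nat)
  (f : 'cV[R]_n -> R) (g : 'cV[R]_n -> \bar R) (Lf rho : R)
  (x0 : 'cV[R]_n) (gam delta0 mu1 mu2 c1 c2 c3 M beta : R)
  (x d : nat -> 'cV[R]_n) (delta : nat -> R) (P : nat -> 'M[R]_n) :
  (* standing assumptions on f, g, phi = f + g *)
  C2plus f ->
  0 <= Lf ->
  (forall y z, enorm (grad f y - grad f z) <= Lf * enorm (y - z)) ->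
  proper_fun g -> lsc g -> 0 <= rho -> weakly_convex rho g ->
  (exists xs, forall y, ((f xs)%:E + g xs <= (f y)%:E + g y)%E) ->
  (exists r : R, forall y, ((f y)%:E + g y <= (f x0)%:E + g x0)%E -> enorm y <= r) ->
  (* parameters of NTRA: gam in (0, min{1/Lf, 1/rho}) *)
  0 < gam -> gam * Lf < 1 -> gam * rho < 1 ->
  0 < delta0 -> 0 < mu1 -> mu1 < mu2 -> mu2 < 1 ->
  0 < c1 -> c1 < c2 -> c2 < 1 -> 1 < c3 ->
  (* the iterates of NTRA *)
  x 0%N = x0 -> delta 0%N = delta0 ->
  (forall k, clarke_jac (prox gam g) (x k - gam *: grad f (x k)) (P k)) ->
  (* the algorithm never stops *)
  (forall k, ~ (Rgam f g gam (x k) = 0 /\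
               forall a, eigenvalue (Bmat f gam (x k) (P k)) a -> 0 <= a)) ->
  (forall k, enorm (d k) <= delta k) ->
  (forall k,
    let B := Bmat f gam (x k) (P k) in
    let rk := (FBE f g gam (x k) - FBE f g gam (x k + d k)) /
              (model f g gam (x k) B 0 - model f g gam (x k) B (d k)) in
    (x k.+1 = if rk < mu1 then x k else x k + d k) /\
    (delta k.+1 = if rk < mu1 then c1 * delta k
                  else if rk < mu2 then c2 * delta k else c3 * delta k)) ->
  (* additional assumptions *)
  0 < M -> (forall k, opnorm (Bmat f gam (x k) (P k)) <= M) ->
  0 < beta -> beta < 1 ->
  (forall k,
    let B := Bmat f gam (x k) (P k) in
    let G := enorm (grad (FBE f g gam) (x k)) in
    model f g gam (x k) B 0 - model f g gam (x k) B (d k)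
      >= beta * G * min_ratio (delta k) G (opnorm B)) ->
  limn_einf (fun k => (enorm (grad (FBE f g gam) (x k)))%:E) = 0%E.
Proof.
move=> HC2 L0 HLip Hprop Hlsc rho0 Hwc Hmin Hlev gam0 gamL gamrho delta00 mu10 mu12 mu21
  c10 c12 c21 c31 Hx0 Hd0 HP Hnostop Hdk Hstep M0 HM beta0 beta1 Hdec.
apply: liminf_zero => [k|eps eps0 K0]; first exact: enorm_ge0.
case: (pselect (exists k, (K0 <= k)%N /\ enorm (grad (FBE f g gam) (x k)) < eps)) => // Hno.
exfalso.
have c11 : c1 < 1 := lt_trans c12 c21.
have HK : forall k, (K0 <= k)%N -> eps <= enorm (grad (FBE f g gam) (x k)).
  by move=> k Kk; rewrite leNgt; apply/negP => hk; apply: Hno; exists k.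
have [HG1 [HJ1 [_ HH4]]] := HC2.
have HGf : forall y, is_grad f y (grad f y) := fun y => grad_spec f y (HG1 y).
have HJ : forall y, is_jac (grad f) y (jac (grad f) y) := fun y => jac_spec (grad f) y (HJ1 y).
have [gnN [x1 gx1]] := Hprop.
have [xs Hxs] := Hmin.
set psi := FBE f g gam.
have PL : forall y u gu, g u = gu%:E -> psi y <= ell f gam y u gu
  := fun y u gu => @psi_le _ _ f g gam Lf x1 xs HGf HLip gnN gx1 Hxs gam0 gamL y u gu.
have PG : forall y, mphi f g xs <= psi y
  := @psi_ge _ _ f g gam Lf x1 xs HGf HLip gnN gx1 Hxs gam0 gamL.
have EL : forall y u gu, g u = gu%:E -> mphi f g xs + cc gam Lf * enorm (u - y) ^+ 2 <= ell f gam y u gu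
  := fun y u gu => @ell_lb _ _ f g gam Lf x1 xs HGf HLip gnN gx1 Hxs gam0 y u gu.
have ccp : 0 < cc gam Lf := cc_gt0 gam Lf gam0 gamL.
set m := mphi f g xs.
pose B k := Bmat f gam (x k) (P k).
pose pred k := model f g gam (x k) (B k) 0 - model f g gam (x k) (B k) (d k).
pose rk k := (psi (x k) - psi (x k + d k)) / pred k.
pose Gv k := grad psi (x k).
pose G k := enorm (Gv k).
have Hst : forall k, (x k.+1 = if rk k < mu1 then x k else x k + d k) /\
    (delta k.+1 = if rk k < mu1 then c1 * delta k
                  else if rk k < mu2 then c2 * delta k else c3 * delta k)
  := fun k => Hstep k.
have Hdec' : forall k, beta * G k * min_ratio (delta k) (G k) (opnorm (B k)) <= pred k
  := fun k => Hdec k.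
have dpos : forall k, 0 < delta k.
  elim => [|k IH]; first by rewrite Hd0.
  have [_ ->] := Hst k.
  by case: ifP => _; [|case: ifP => _]; apply: mulr_gt0 => //; lra.
have pred_eq : forall k, pred k = - dot (Gv k) (d k) - 1 / 2 * dot (B k *m d k) (d k).
  by move=> k; rewrite /pred /model dot0r mulmx0 dot0r; ring.
pose pm k := Num.min (delta k) (eps / M).
have pm_pos : forall k, 0 < pm k by move=> k; rewrite lt_min dpos divr_gt0.
have predlb : forall k, (K0 <= k)%N -> beta * eps * pm k <= pred k.
  move=> k Kk; apply: le_trans (Hdec' k).
  have Gk := HK k Kk; have b0 := opnorm_ge0 (B k); have bM := HM k.
  have mr : pm k <= min_ratio (delta k) (G k) (opnorm (B k)).
    rewrite /min_ratio; case: eqP => [_|/eqP bn0]; first by rewrite /pm ge_min lexx.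
    have bp : 0 < opnorm (B k) by rewrite lt_def bn0 b0.
    rewrite le_min /pm ge_min lexx /=.
    rewrite ge_min; apply/orP; right.
    apply: ler_pM; [exact: ltW|by rewrite invr_ge0 ltW|exact: Gk|].
    by rewrite lef_pV2 ?posrE.
  apply: ler_pM; [|exact: (ltW (pm_pos k))|by rewrite ler_pM2l|exact: mr].
  by rewrite mulr_ge0 ?ltW.
have predpos : forall k, (K0 <= k)%N -> 0 < pred k.
  by move=> k Kk; apply: lt_le_trans (predlb k Kk); rewrite !mulr_gt0.
have acc : forall k, (K0 <= k)%N -> ~~ (rk k < mu1) -> mu1 * pred k <= psi (x k) - psi (x k.+1).
  move=> k Kk hr; have [Hx _] := Hst k; rewrite Hx (negbTE hr).
  have pp := predpos k Kk.
  have -> : psi (x k) - psi (x k + d k) = rk k * pred k by rewrite /rk divfK // gt_eqF.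
  by rewrite ler_pM2r // leNgt.
have rej : forall k, rk k < mu1 -> x k.+1 = x k /\ delta k.+1 = c1 * delta k.
  by move=> k hr; have [Hx Hd] := Hst k; rewrite Hx Hd hr.
have mono : forall k, (K0 <= k)%N -> psi (x k.+1) <= psi (x k).
  move=> k Kk; case: (boolP (rk k < mu1)) => hr; first by rewrite (rej k hr).1.
  have := acc k Kk hr; have := predpos k Kk; move=> h1 h2.
  have : 0 <= mu1 * pred k by rewrite mulr_ge0 ?ltW.
  lra.
have monoL : forall p q, (K0 <= q)%N -> (q <= p)%N -> psi (x p) <= psi (x q).
  move=> p q Kq qp; rewrite -(subnKC qp); elim: (p - q)%N => [|j IH]; first by rewrite addn0.
  apply: le_trans IH; rewrite addnS; apply: mono.
  by apply: leq_trans Kq (leq_addr _ _).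
have psiC : forall eta, 0 < eta -> exists N, (K0 <= N)%N /\
    forall p, (N <= p)%N -> psi (x N) - psi (x p) < eta.
  move=> eta eta0.
  pose S := [set psi (x k) | k in [set k | (K0 <= k)%N]].
  have Slb : has_lbound S by exists m => _ [k _ <-]; exact: PG.
  have Sinf : has_inf S.
    by split; [exists (psi (x K0)); exists K0 => //=; exact: leqnn|exact: Slb].
  have [_ [N KN <-] HN] := inf_adherent eta0 Sinf.
  exists N; split => // p Np.
  have : inf S <= psi (x p).
    by apply: (ge_inf Slb); exists p => //=; exact: leq_trans KN Np.
  move=> h1; clear -HN h1; lra.
have accsmall : forall s, 0 < s -> s <= eps / M -> exists N, (K0 <= N)%N /\
    forall k, (N <= k)%N -> ~~ (rk k < mu1) -> delta k < s.
  move=> s s0 sM.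
  have e0 : 0 < mu1 * (beta * eps * s) by rewrite !mulr_gt0.
  have [N [KN HN]] := psiC _ e0.
  exists N; split => // k Nk hacc.
  have Kk : (K0 <= k)%N by exact: leq_trans KN Nk.
  have h1 := acc k Kk hacc; have h2 := predlb k Kk.
  have h3 := HN k.+1 (leq_trans Nk (leqnSn k)).
  have h4 := monoL k N KN Nk.
  have : mu1 * (beta * eps * pm k) < mu1 * (beta * eps * s).
    have : mu1 * (beta * eps * pm k) <= mu1 * pred k by rewrite ler_pM2l.
    move=> h5; clear -h1 h3 h4 h5; lra.
  rewrite ltr_pM2l // ltr_pM2l ?mulr_gt0 // /pm gt_min => /orP[//|h].
  by move: (lt_le_trans h sM); rewrite ltxx.
have eM0 : 0 < eps / M by rewrite divr_gt0.
have [Na [KNa HNa]] := accsmall _ eM0 (lexx _).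
pose c0 := mu1 * beta * eps.
have c0p : 0 < c0 by rewrite !mulr_gt0.
have move1 : forall k, (Na <= k)%N ->
    enorm (x k.+1 - x k) <= (psi (x k) - psi (x k.+1)) / c0.
  move=> k Nk; have Kk : (K0 <= k)%N by exact: leq_trans KNa Nk.
  case: (boolP (rk k < mu1)) => hr.
    rewrite (rej k hr).1 subrr enorm0 subrr mul0r //.
  have [Hx _] := Hst k.
  have -> : x k.+1 - x k = d k by rewrite Hx (negbTE hr) (addrC (x k)) addrK.
  have dk := HNa k Nk hr.
  have pmd : pm k = delta k by rewrite /pm min_l // ltW.
  have h1 := acc k Kk hr; have h2 := predlb k Kk.
  rewrite ler_pdivlMr //; apply: le_trans (ler_wpM2r (ltW c0p) (Hdk k)) _.
  rewrite pmd in h2.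
  have : mu1 * (beta * eps * delta k) <= mu1 * pred k by rewrite ler_pM2l.
  rewrite /c0 => h3; clear -h1 h3; lra.
have telesc : forall q j, (Na <= q)%N ->
    enorm (x (q + j)%N - x q) <= (psi (x q) - psi (x (q + j)%N)) / c0.
  move=> q; elim => [|j IH] Nq; first by rewrite addn0 !subrr enorm0 mul0r.
  apply: le_trans (enormDB _ (x (q + j)%N) _) _.
  rewrite addnS; apply: le_trans (lerD (move1 _ (leq_trans Nq (leq_addr _ _))) (IH Nq)) _.
  by rewrite -mulrDl addrC addrA subrK.
have xC : forall e, 0 < e -> exists N, forall p q, (N <= p)%N -> (N <= q)%N ->
    enorm (x p - x q) < e.
  move=> e e0.
  have [N [KN HN]] := psiC (e * c0) (mulr_gt0 e0 c0p).
  exists (maxn N Na) => p q; rewrite !geq_max => /andP[Np Nap] /andP[Nq Naq].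
  wlog qp : p q Np Nap Nq Naq / (q <= p)%N.
    move=> W; case: (leqP q p) => [|/ltnW] h; first exact: W.
    by rewrite enormB; apply: W.
  have := telesc q (p - q)%N Naq; rewrite subnKC // => h1.
  apply: le_lt_trans h1 _; rewrite ltr_pdivrMr //.
  have h1 := HN p Np; have h2 := monoL q N KN Nq; clear -h1 h2; lra.
have [xst Hxst] := vec_cauchy x xC.
have [r [Kh [r0 HKh]]] := HH4 xst.
pose Kp := `|Kh|.
have r20 : 0 < r / 2 by rewrite divr_gt0.
have [N3 HN3] := Hxst (r / 2) r20.
pose Rw := (psi (x K0) + 1 - m) / cc gam Lf + 1.
pose C := Lf / 2 + Kp * Rw / 2 + 1 / (2 * gam).
have SC : forall k, (maxn K0 N3 <= k)%N -> forall dd, enorm dd <= r / 2 ->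
    psi (x k + dd) <= psi (x k) + dot (Gv k) dd + C * enorm dd ^+ 2.
  move=> k; rewrite geq_max => /andP[Kk Nk].
  apply: (@semiconc _ _ f g gam Lf x1 xs HGf HLip gnN gx1 Hxs gam0 gamL HJ (x k) (Gv k) Kp Rw (r / 2) L0).
  - apply: grad_nz; apply/eqP => G0; have := HK k Kk.
    by rewrite G0 enorm0 leNgt eps0.
  - exact: normr_ge0.
  - move=> u gu gu_ hle.
    have h1 := EL (x k) u gu gu_.
    have h2 := monoL k K0 (leqnn _) Kk.
    set w := enorm (u - x k) in h1 *.
    have w2 : w ^+ 2 <= (psi (x K0) + 1 - m) / cc gam Lf.
      rewrite ler_pdivlMr // mulrC; rewrite -/psi -/m in h1 hle.
      clear -h1 h2 hle; lra.
    have : w <= w ^+ 2 + 1 by rewrite expr2; clear; nra.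
    rewrite /Rw; clear -w2; lra.
  - move=> dd ddr t /andP[t0 t1].
    have xk := HN3 k Nk.
    have tdd : enorm (t *: dd) <= r / 2.
      rewrite enormZ ger0_norm //; apply: le_trans ddr.
      by rewrite -[X in _ <= X]mul1r ler_wpM2r ?enorm_ge0.
    have h1 : enorm (x k + t *: dd - xst) < r.
      have -> : x k + t *: dd - xst = (x k - xst) + t *: dd by rewrite addrAC.
      apply: le_lt_trans (enormD _ _) _.
      by clear -xk tdd; lra.
    have h2 : enorm (x k - xst) < r by clear -xk r0; lra.
    apply: le_trans (HKh _ _ h1 h2) _.
    rewrite (addrC (x k)) addrK enormZ ger0_norm // mulrA.
    by rewrite ler_wpM2r ?enorm_ge0 // ler_wpM2r // ler_norm.
pose th := Num.min (r / 2) (Num.min (eps / M) ((1 - mu2) * beta * eps / (M / 2 + C))).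
have Rw0 : 0 <= Rw.
  have := PG (x K0); rewrite -/psi -/m => h.
  rewrite /Rw addr_ge0 // divr_ge0 ?(ltW ccp) //; clear -h; lra.
have C0 : 0 <= C.
  rewrite /C !addr_ge0 ?divr_ge0 ?mulr_ge0 ?normr_ge0 //; clear -gam0; lra.
have MC : 0 < M / 2 + C by rewrite ltr_pwDl // divr_gt0.
have th0 : 0 < th.
  rewrite /th !lt_min r20 eM0 /= divr_gt0 // !mulr_gt0 //; clear -mu21; lra.
have thr : th <= r / 2 by rewrite /th ge_min lexx.
have thM : th <= eps / M by rewrite /th !ge_min lexx orbT.
have thC : th <= (1 - mu2) * beta * eps / (M / 2 + C) by rewrite /th !ge_min lexx !orbT.
have Acc : forall k, (maxn K0 N3 <= k)%N -> delta k <= th -> ~~ (rk k < mu2).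
  move=> k Nk dk; have Kk : (K0 <= k)%N by move: Nk; rewrite geq_max => /andP[].
  have pp := predpos k Kk.
  have h1 := predlb k Kk.
  have pmd : pm k = delta k by rewrite /pm min_l // (le_trans dk thM).
  rewrite pmd in h1.
  have dd := Hdk k.
  have ddr : enorm (d k) <= r / 2 by apply: le_trans dd (le_trans dk thr).
  have h2 := SC k Nk (d k) ddr.
  have h3 := pred_eq k.
  have h4 : `|dot (B k *m d k) (d k)| <= M * enorm (d k) ^+ 2.
    exact: le_trans (dotB_bound _ _) (ler_wpM2r (sqr_ge0 _) (HM k)).
  have nd0 := enorm_ge0 (d k).
  have h5 : enorm (d k) ^+ 2 <= delta k ^+ 2.
    by rewrite ler_sqr ?nnegrE ?(ltW (dpos k)).
  have h6 : (M / 2 + C) * delta k <= (1 - mu2) * beta * eps.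
    by rewrite mulrC -ler_pdivlMr //; apply: le_trans dk thC.
  have f1 : (M / 2 + C) * enorm (d k) ^+ 2 <= (M / 2 + C) * delta k ^+ 2 by rewrite ler_wpM2l // ltW.
  have f2 : (M / 2 + C) * delta k ^+ 2 <= (1 - mu2) * beta * eps * delta k.
    by rewrite expr2 mulrA ler_wpM2r // ltW.
  have f3 : (1 - mu2) * (beta * eps * delta k) <= (1 - mu2) * pred k.
    by rewrite ler_wpM2l //; clear -mu21; lra.
  rewrite -leNgt /rk ler_pdivlMr // -/psi.
  move: h4; rewrite ler_norml => /andP[h4 _].
  rewrite h3 in h2 f3 *.
  clear -h2 h4 f1 f2 f3; lra.
have c1th : c1 * th <= eps / M.
  have : c1 * th <= 1 * th.
    by rewrite ler_pM2r //; exact: (ltW c11).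
  by rewrite mul1r => h; exact: le_trans h thM.
have [N2 [KN2 HN2]] := accsmall (c1 * th) (mulr_gt0 c10 th0) c1th.
pose N := maxn (maxn K0 N3) N2.
have Ha : forall k, (N <= k)%N -> delta k <= th -> delta k.+1 = c3 * delta k /\ delta k < c1 * th.
  move=> k; rewrite geq_max => /andP[Nk1 Nk2] dk.
  have h := Acc k Nk1 dk.
  have h' : ~~ (rk k < mu1).
    move: h; rewrite -!leNgt => h; apply: le_trans h; exact: ltW.
  split; last exact: HN2 k Nk2 h'.
  by have [_ ->] := Hst k; rewrite (negbTE h') (negbTE h).
have Hb : forall k, (N <= k)%N -> th < delta k -> delta k.+1 = c1 * delta k.
  move=> k Nk dk; case: (boolP (rk k < mu1)) => hr; first exact: (rej k hr).2.
  exfalso; move: Nk; rewrite geq_max => /andP[_ Nk2].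
  have := HN2 k Nk2 hr => h.
  have : c1 * th < th by rewrite -[X in _ < X]mul1r ltr_pM2r.
  move: dk h; clear; move=> dk h h'; have := lt_trans (lt_trans dk h) h'; rewrite ltxx.
  done.
have Hc : forall k, (N <= k)%N -> th < delta k -> th < delta k.+1.
  move=> k Nk dk; rewrite ltNge; apply/negP => dk1.
  have := (Ha k.+1 (leq_trans Nk (leqnSn _)) dk1).2; rewrite (Hb k Nk dk).
  by rewrite ltr_pM2l // => /(lt_trans dk); rewrite ltxx.
have Hex : exists k0, (N <= k0)%N /\ th < delta k0.
  apply: contrapT => Hn.
  have all_le : forall k, (N <= k)%N -> delta k <= th.
    by move=> k Nk; rewrite leNgt; apply/negP => h; apply: Hn; exists k.
  have gr : forall j, delta (N + j)%N = c3 ^+ j * delta N.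
    elim => [|j IH]; first by rewrite addn0 expr0 mul1r.
    rewrite addnS (Ha _ (leq_addr _ _) (all_le _ (leq_addr _ _))).1 IH exprS mulrA.
    done.
  have [j hj] := geo_big c3 (delta N) th c31 (dpos N).
  rewrite -gr in hj.
  by have := all_le (N + j)%N (leq_addr _ _); rewrite leNgt hj.
have [k0 [Nk0 dk0]] := Hex.
have all_gt : forall j, th < delta (k0 + j)%N /\ delta (k0 + j)%N = c1 ^+ j * delta k0.
  elim => [|j [IH1 IH2]]; first by rewrite addn0 expr0 mul1r.
  have Nkj : (N <= k0 + j)%N by exact: leq_trans Nk0 (leq_addr _ _).
  rewrite addnS; split; first exact: Hc.
  by rewrite (Hb _ Nkj IH1) IH2 exprS mulrA.
have c1i : 1 < c1^-1 by rewrite invf_gt1.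
have [j hj] := geo_big (c1^-1) th (delta k0) c1i th0.
have [h1 h2] := all_gt j; rewrite h2 in h1.
have : c1 ^+ j * delta k0 < c1 ^+ j * (c1^-1 ^+ j * th) by rewrite ltr_pM2l ?exprn_gt0.
rewrite mulrA -exprMn mulfV ?gt_eqF // expr1n mul1r => h3.
by have := lt_trans h1 h3; rewrite ltxx.
Qed.
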